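(* Let $C$ be a normal closed cone with nonempty interior in a real Banach space $X$. Let $f:\operatorname{int} C \to \operatorname{int} C$ be order-preserving and homogeneous, and suppose $f$ has an eigenvector in $\operatorname{int} C$. Let $g(x) = f(x)/\|f(x)\|$ for $x \in \operatorname{int} C$. Then for every $x \in \operatorname{int} C$, the closure of the orbit $\mathcal{O}(x, r_C(f)^{-1} f)$ is compact if and only if the closure of the orbit $\mathcal{O}(x, g)$ is compact.
   Context: A closed cone is a closed convex set $C \subset X$ with $\lambda C \subset C$ for $\lambda \ge 0$ and $C \cap (-C) = \{0\}$; $x\le y$ means $y-x\in C$. $C$ is normal if there is $\kappa > 0$ with $\|x\| \le \kappa \|y\|$ whenever $0 \le x \le y$. $f$ is homogeneous if $f(tx) = t f(x)$ for all $t > 0$. The cone spectral radius is $r_C(f) = \limsup_{k\to\infty} \|f^k(x)\|^{1/k}$ for any $x \in \operatorname{int} C$ (independent of $x$, and positive). The orbit of $x$ under a map $h$ is $\mathcal{O}(x,h) = \{h^k(x): k \in \mathbb{N}\}$. *)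

(* Defs.v *)
From HB Require Import structures.
From mathcomp Require Import all_boot all_order all_algebra.
From mathcomp Require Import all_classical all_reals all_analysis.
Set Implicit Arguments. Unset Strict Implicit. Unset Printing Implicit Defensive.
Import Order.TTheory GRing.Theory Num.Theory.
Import numFieldNormedType.Exports.
Local Open Scope classical_set_scope.
Local Open Scope ring_scope.

Section ConeDefs.
Context {R : realType} {X : normedModType R}.

Definition closed_cone (C : set X) : Prop :=
  [/\ closed C,
      (forall x y (t : R), C x -> C y -> 0 <= t -> t <= 1 -> C (t *: x + (1 - t) *: y)),
      (forall x (l : R), C x -> 0 <= l -> C (l *: x)) &
      (forall x, C x -> C (- x) -> x = 0)].

Definition cone_le (C : set X) (x y : X) : Prop := C (y - x).

Definition normal_cone (C : set X) : Prop :=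
  exists2 kappa : R, 0 < kappa &
    forall x y, cone_le C 0 x -> cone_le C x y -> `|x| <= kappa * `|y|.

Definition cone_spectral_radius (f : X -> X) (x : X) : R :=
  fine (limn_esup (fun k : nat => ((`| iter k f x |) `^ (k%:R^-1))%:E)).

Definition cone_orbit (h : X -> X) (x : X) : set X := range (fun k : nat => iter k h x).

End ConeDefs.

(* Main.v *)
Require Import Defs.
From HB Require Import structures.
From mathcomp Require Import all_boot all_order all_algebra.
From mathcomp Require Import all_classical all_reals all_analysis.
From mathcomp Require Import ring lra.
Import Order.TTheory GRing.Theory Num.Theory.
Import numFieldNormedType.Exports.
Local Open Scope classical_set_scope.
Local Open Scope ring_scope.
Lemma powR_inv_cvg (R : realType) (A : R) : 0 < A -> (fun k : nat => A `^ (k%:R^-1)) @ \oo --> (1:R).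
Proof.
move=> A0; rewrite -cvg_shiftS.
have -> : [sequence A `^ (n.+1%:R^-1)]_n = expR \o (fun k => harmonic k * ln A).
  by apply/funext => k /=; rewrite /powR gt_eqF.
rewrite -expR0; apply: continuous_cvg; first exact: continuous_expR.
rewrite -(mul0r (ln A)); apply: cvgMl; exact: cvg_harmonic.
Qed.

Lemma powR_bound (R : realType) (A l : R) (k : nat) : 0 < A -> 0 < l -> (0 < k)%N ->
  (A * l ^+ k) `^ (k%:R^-1) = A `^ (k%:R^-1) * l.
Proof.
move=> A0 l0 k0; rewrite powRM ?exprn_ge0 ?ltW//; congr (_ * _).
rewrite -powR_mulrn ?ltW// -powRrM mulfV ?powRr1 ?ltW// pnatr_eq0 -lt0n //.
Qed.

Lemma spec_lim (R : realType) (s : nat -> R) (A B l : R) : 0 < A -> 0 < B -> 0 < l ->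
  (forall k, A * l ^+ k <= s k <= B * l ^+ k) ->
  fine (limn_esup (fun k => (s k `^ (k%:R^-1))%:E)) = l.
Proof.
move=> A0 B0 l0 H.
have cv : (fun k => s k `^ (k%:R^-1)) @ \oo --> l.
  apply: (@squeeze_cvgr _ _ _ _ (fun k => A `^ (k%:R^-1) * l) (fun k => B `^ (k%:R^-1) * l)).
  - near=> k.
    have k0 : (0 < k)%N by near: k; exact: nbhs_infty_gt.
    have [H1 H2] := andP (H k).
    rewrite -!powR_bound //.
    have Al : 0 <= A * l ^+ k by rewrite mulr_ge0 ?exprn_ge0 ?ltW.
    apply/andP; split; apply: ge0_ler_powR => //; rewrite ?nnegrE ?invr_ge0 ?ler0n //.
    + exact: le_trans Al H1.
    + exact: le_trans Al H1.
    + by rewrite mulr_ge0 ?exprn_ge0 ?ltW.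
  - rewrite -[X in _ --> X]mul1r; apply: cvgMl; exact: powR_inv_cvg.
  - rewrite -[X in _ --> X]mul1r; apply: cvgMl; exact: powR_inv_cvg.
have ecv : (fun k => (s k `^ (k%:R^-1))%:E) @ \oo --> l%:E.
  by apply: cvg_EFin; [exact: nearW | exact: cv].
by rewrite is_cvg_limn_esupE ?(cvg_lim _ ecv)//; apply/cvg_ex; exists l%:E.
Unshelve. all: by end_near.
Qed.

Lemma scale_compact (R : realType) (X : normedModType R) (p q : nat -> X) (a b : R) :
  (forall k, exists t, a <= t <= b /\ p k = t *: q k) ->
  compact (closure (range q)) -> compact (closure (range p)).
Proof.
move=> H Kq.
pose S := [set z.1 *: z.2 | z in ((`[a, b] : set R^o) `*` closure (range q))].
have cS : compact S.
  apply: continuous_compact; last exact: compact_setX (@segment_compact R a b) Kq.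
  apply: continuous_subspaceT => z; exact: scale_continuous.
apply: (subclosed_compact _ cS); first exact: closed_closure.
have -> : S = closure S by apply/closure_id; apply: compact_closed => //; exact: norm_hausdorff.
apply: closureS => _ [k _ <-].
have [t [tab ->]] := H k.
exists (t, q k) => //; split => //=.
by apply: subset_closure; exists k.
Qed.

Lemma scale_compact2 (R : realType) (X : normedModType R) (p q : nat -> X) (a b : R) :
  0 < a -> (forall k, exists t, a <= t <= b /\ p k = t *: q k) ->
  compact (closure (range q)) <-> compact (closure (range p)).
Proof.
move=> a0 H; split; first exact: scale_compact H.
apply: (@scale_compact _ _ _ _ b^-1 a^-1) => k.
have [t [/andP [ta tb] ->]] := H k.
have t0 : 0 < t by exact: lt_le_trans ta.
exists t^-1; split; last by rewrite scalerA mulVf ?gt_eqF // scale1r.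
by rewrite !lef_pV2 ?posrE ?ta ?tb // (lt_le_trans a0) // (le_trans ta).
Qed.

Lemma ratio_bounds (R : realType) (A B L N : R) : 0 < A -> 0 < L ->
  A * L <= N <= B * L -> B^-1 <= L / N <= A^-1.
Proof.
move=> A0 L0 /andP [h1 h2].
have N0 : 0 < N by apply: lt_le_trans h1; exact: mulr_gt0.
have B0 : 0 < B by rewrite -(pmulr_lgt0 _ L0); exact: lt_le_trans h2.
apply/andP; split.
  by rewrite ler_pdivlMr // mulrC ler_pdivrMr // mulrC.
by rewrite ler_pdivrMr // -(ler_pM2l A0) mulrA mulfV ?gt_eqF // mul1r.
Qed.
Set Implicit Arguments. Unset Strict Implicit.
Section Cone.
Context {R : realType} {X : normedModType R} (C : set X).
Hypothesis cC : closed_cone C.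

Lemma int_ball x : interior C x <-> exists2 e : R, 0 < e & forall y, `|x - y| < e -> C y.
Proof.
rewrite /interior; split.
  move=> /nbhs_ballP [e e0 He]; exists e => // y xy; apply: He; by rewrite -ball_normE.
move=> [e e0 He]; apply/nbhs_ballP; exists e => // y; rewrite -ball_normE; exact: He.
Qed.

Lemma coneD x y : C x -> C y -> C (x + y).
Proof.
case: cC => _ cv sc _ Cx Cy.
have := sc _ 2 (cv x y 2^-1 Cx Cy _ _) _.
rewrite scalerDr !scalerA mulfV ?pnatr_eq0// scale1r.
have -> : (1 - 2^-1 : R) = 2^-1 by rewrite {1}(splitr 1) mul1r addrK.
rewrite mulfV ?pnatr_eq0 // scale1r; apply => //.
by rewrite invf_le1 // ler1n.
Qed.

Lemma coneZ x (t : R) : C x -> 0 <= t -> C (t *: x).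
Proof. by case: cC => _ _ sc _; apply: sc. Qed.

Lemma int_C x : interior C x -> C x.
Proof. exact: interior_subset. Qed.

Lemma le_trans_cone x y z : cone_le C x y -> cone_le C y z -> cone_le C x z.
Proof.
rewrite /cone_le => h1 h2; have := coneD h2 h1.
by rewrite addrA subrK.
Qed.

Lemma push p q : interior C p -> exists2 s : R, 0 < s & C (p - s *: q).
Proof.
move=> /int_ball [e e0 He]; exists (e / (`|q| + 1)).
  by rewrite divr_gt0 // ltr_wpDl.
apply: He; rewrite opprB addrC subrK normrZ ger0_norm; last by rewrite divr_ge0 ?ltW // ltr_wpDl.
rewrite -mulrA gtr_pMr // mulrC ltr_pdivrMr ?mul1r ?ltrDl // ltr_wpDl //.
Qed.

Lemma intZ x (t : R) : interior C x -> 0 < t -> interior C (t *: x).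
Proof.
move=> /int_ball [e e0 He] t0; apply/int_ball; exists (t * e); first exact: mulr_gt0.
move=> y hy; have -> : y = t *: (t^-1 *: y) by rewrite scalerA mulfV ?gt_eqF // scale1r.
apply: coneZ; last exact: ltW.
apply: He; rewrite -[x](scale1r) -(@mulVf _ t) ?gt_eqF // -scalerA -scalerBr normrZ.
by rewrite gtr0_norm ?invr_gt0 // mulrC ltr_pdivrMr // mulrC.
Qed.

Variable f : X -> X.
Hypothesis fint : forall x, interior C x -> interior C (f x).
Hypothesis fmono : forall x y, interior C x -> interior C y -> cone_le C x y -> cone_le C (f x) (f y).
Hypothesis fhom : forall x (t : R), interior C x -> 0 < t -> f (t *: x) = t *: f x.

Lemma it_int k x : interior C x -> interior C (iter k f x).
Proof. by move=> h; elim: k => //= k IH; apply: fint. Qed.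

Lemma it_hom k x t : interior C x -> 0 < t -> iter k f (t *: x) = t *: iter k f x.
Proof. by move=> h t0; elim: k => //= k ->; rewrite fhom //; exact: it_int. Qed.

Lemma it_mono k x y : interior C x -> interior C y -> cone_le C x y ->
  cone_le C (iter k f x) (iter k f y).
Proof. by move=> hx hy h; elim: k => //= k IH; apply: fmono => //; apply: it_int. Qed.

Variables (v : X) (l : R).
Hypothesis (vint : interior C v) (vn0 : v != 0) (fv : f v = l *: v).

Lemma l_gt0 : 0 < l.
Proof.
case: cC => _ _ sc pt.
have Cv := int_C vint.
case: (ltgtP l 0) => // hl.
  have : C (- v).
    have := sc _ (- l^-1) (int_C (fint vint)) _.
    rewrite fv scalerA mulNr mulVf ?lt_eqF // scaleN1r; apply.
    by rewrite oppr_ge0 invr_le0 ltW.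
  by move/(pt _ Cv)/eqP; rewrite (negbTE vn0).
have := fint vint; rewrite fv hl scale0r => /(push v) [s s0].
rewrite sub0r => Cm.
have : s *: v = 0 by apply: pt; [apply: sc => //; exact: ltW | rewrite -scaleNr scaleNr].
by move/eqP; rewrite scaler_eq0 gt_eqF //= (negbTE vn0).
Qed.

Lemma it_eig k : iter k f v = l ^+ k *: v.
Proof.
elim: k => [|k /= ->]; first by rewrite scale1r.
by rewrite fhom ?exprn_gt0 ?l_gt0 // fv scalerA exprSr.
Qed.

Lemma compare u : interior C u -> exists a b : R,
  [/\ 0 < a, 0 < b, cone_le C (a *: v) u & cone_le C u (b *: v)].
Proof.
move=> hu; have [a a0 Ha] := push v hu; have [s s0 Hs] := push u vint.
exists a, s^-1; split => //; first by rewrite invr_gt0.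
rewrite /cone_le.
have -> : s^-1 *: v - u = s^-1 *: (v - s *: u) by rewrite scalerBr scalerA mulVf ?gt_eqF // scale1r.
by apply: coneZ => //; rewrite invr_ge0 ltW.
Qed.

Hypothesis nC : normal_cone C.

Lemma norm_bounds u : interior C u -> exists A B : R,
  [/\ 0 < A, 0 < B & forall k, A * l ^+ k <= `|iter k f u| <= B * l ^+ k].
Proof.
move=> hu; have [a [b [a0 b0 au ub]]] := compare hu.
case: nC => kap k0 Hk.
have nv : 0 < `|v| by rewrite normr_gt0.
have l0 := l_gt0.
exists (a * `|v| / kap), (kap * b * `|v|); split.
- by rewrite !mulr_gt0 // invr_gt0.
- by rewrite !mulr_gt0.
move=> k; apply/andP; split.
- have h1 : cone_le C 0 ((a * l ^+ k) *: v).
    by rewrite /cone_le subr0; apply: coneZ; [exact: int_C | rewrite mulr_ge0 ?exprn_ge0 ?ltW].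
  have h2 : cone_le C ((a * l ^+ k) *: v) (iter k f u).
    have := it_mono k (intZ vint a0) hu au.
    by rewrite it_hom // it_eig scalerA mulrC.
  have := Hk _ _ h1 h2; rewrite normrZ ger0_norm; last by rewrite mulr_ge0 ?exprn_ge0 // ltW.
  move=> H; rewrite -(ler_pM2l k0); apply: le_trans H.
  have -> : kap * (a * `|v| / kap * l ^+ k) = a * l ^+ k * `|v| by field; rewrite gt_eqF.
  by [].
- have h1 : cone_le C 0 (iter k f u).
    by rewrite /cone_le subr0; apply: int_C; apply: it_int.
  have h2 : cone_le C (iter k f u) ((b * l ^+ k) *: v).
    have := it_mono k hu (intZ vint b0) ub.
    by rewrite it_hom // it_eig scalerA mulrC.
  apply: le_trans (Hk _ _ h1 h2) _.
  rewrite normrZ ger0_norm; last by rewrite mulr_ge0 ?exprn_ge0 // ltW.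
  have -> : kap * (b * l ^+ k * `|v|) = kap * b * `|v| * l ^+ k by ring.
  by [].
Qed.

End Cone.

Theorem mainTheorem4 (R : realType) (X : completeNormedModType R)
    (C : set X) (f : X -> X) :
  closed_cone C -> normal_cone C -> interior C !=set0 ->
  (forall x, interior C x -> interior C (f x)) ->
  (forall x y, interior C x -> interior C y -> cone_le C x y -> cone_le C (f x) (f y)) ->
  (forall x (t : R), interior C x -> 0 < t -> f (t *: x) = t *: f x) ->
  (exists v, exists l : R, [/\ interior C v, v != 0 & f v = l *: v]) ->
  forall u x, interior C u -> interior C x ->
    (compact (closure (cone_orbit (fun y : X => (cone_spectral_radius f u)^-1 *: f y) x))
     <-> compact (closure (cone_orbit (fun y : X => (`|f y|)^-1 *: f y) x))).
Proof.
move=> cC nC _ fint fmono fhom [v [l [vint vn0 fv]]] u x hu hx.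
have l0 : 0 < l := l_gt0 cC fint vint vn0 fv.
have [A [B [A0 B0 Hu]]] := norm_bounds cC fint fmono fhom vint vn0 fv nC hu.
have [A' [B' [A0' B0' Hx]]] := norm_bounds cC fint fmono fhom vint vn0 fv nC hx.
rewrite /cone_spectral_radius (@spec_lim _ (fun k => `|iter k f u|) A B l A0 B0 l0 Hu).
rewrite /cone_orbit.
set h := (fun y : X => l^-1 *: f y).
set g := (fun y : X => `|f y|^-1 *: f y).
have hit k : iter k h x = (l ^+ k)^-1 *: iter k f x.
  elim: k => [|k IH] /=; first by rewrite expr0 invr1 scale1r.
  rewrite IH /h fhom ?invr_gt0 ?exprn_gt0 //; last exact: it_int.
  by rewrite scalerA exprS invfM.
have Fpos k : 0 < `|iter k f x|.
  have [h1 _] := andP (Hx k); apply: lt_le_trans h1; exact: mulr_gt0 (exprn_gt0 _ l0).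
have git k : iter k.+1 g x = `|iter k.+1 f x|^-1 *: iter k.+1 f x.
  elim: k => [|k IH] //.
  change (g (iter k.+1 g x) = `|iter k.+2 f x|^-1 *: iter k.+2 f x).
  rewrite IH /g fhom ?invr_gt0 //; last exact: it_int.
  rewrite normrZ gtr0_norm ?invr_gt0 // scalerA invfM invrK mulrAC mulfV ?gt_eqF // mul1r //.
apply: (@scale_compact2 _ _ _ _ (Num.min 1 B'^-1) (Num.max 1 A'^-1)).
  by rewrite lt_min ltr01 invr_gt0.
case => [|k].
  exists 1; split; last by rewrite /= scale1r.
  by rewrite ge_min lexx le_max lexx.
exists (l ^+ k.+1 / `|iter k.+1 f x|); split.
  have /andP [r1 r2] := @ratio_bounds _ A' B' _ _ A0' (exprn_gt0 k.+1 l0) (Hx k.+1).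
  by rewrite ge_min r1 orbT le_max r2 orbT.
by rewrite git hit scalerA mulrAC mulfV ?gt_eqF ?exprn_gt0 // mul1r.
Qed.
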